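(* $(\Sigma_m,\mathrm{Md})$ has the propagation property for pseudo units and the propagation property for pseudo zeros: for all $\Sigma_m$-terms $t,r$ and every $\Sigma_m$-context $C[\,]$, $\mathrm{Md}\vdash 1_t\cdot C[r]=1_t\cdot C[1_t\cdot r]$ and $\mathrm{Md}\vdash 0_t\cdot C[r]=0_t\cdot C[0_t\cdot r]$.
   Context: $\Sigma_m=(0,1,+,\cdot,-,{}^{-1})$; $\mathrm{Md}$ is the set of equations $(x+y)+z=x+(y+z)$, $x+y=y+x$, $x+0=x$, $x+(-x)=0$, $(x\cdot y)\cdot z=x\cdot(y\cdot z)$, $x\cdot y=y\cdot x$, $1\cdot x=x$, $x\cdot(y+z)=x\cdot y+x\cdot z$, $(x^{-1})^{-1}=x$, $x\cdot(x\cdot x^{-1})=x$. $1_t$ abbreviates $t\cdot t^{-1}$, $0_t$ abbreviates $1+(-1_t)$. A context $C[\,]$ is a term with one hole. *)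

(* Defs.v *)
From Stdlib Require Import Arith.

Inductive term : Type :=
  | Var : nat -> term
  | Zero : term
  | One : term
  | Add : term -> term -> term
  | Mul : term -> term -> term
  | Opp : term -> term
  | Inv : term -> term.

Fixpoint subst (s : nat -> term) (t : term) : term :=
  match t with
  | Var n => s n
  | Zero => Zero
  | One => One
  | Add a b => Add (subst s a) (subst s b)
  | Mul a b => Mul (subst s a) (subst s b)
  | Opp a => Opp (subst s a)
  | Inv a => Inv (subst s a)
  end.

Definition vx := Var 0.
Definition vy := Var 1.
Definition vz := Var 2.

Inductive Md : term -> term -> Prop :=
  | Md_addA : Md (Add (Add vx vy) vz) (Add vx (Add vy vz))
  | Md_addC : Md (Add vx vy) (Add vy vx)
  | Md_add0 : Md (Add vx Zero) vx
  | Md_addN : Md (Add vx (Opp vx)) Zero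
  | Md_mulA : Md (Mul (Mul vx vy) vz) (Mul vx (Mul vy vz))
  | Md_mulC : Md (Mul vx vy) (Mul vy vx)
  | Md_mul1 : Md (Mul One vx) vx
  | Md_mulD : Md (Mul vx (Add vy vz)) (Add (Mul vx vy) (Mul vx vz))
  | Md_invK : Md (Inv (Inv vx)) vx
  | Md_pinv : Md (Mul vx (Mul vx (Inv vx))) vx.

Inductive derives (E : term -> term -> Prop) : term -> term -> Prop :=
  | d_ax : forall l r (s : nat -> term), E l r -> derives E (subst s l) (subst s r)
  | d_refl : forall t, derives E t t
  | d_sym : forall t u, derives E t u -> derives E u t
  | d_trans : forall t u v, derives E t u -> derives E u v -> derives E t v
  | d_add : forall a a' b b', derives E a a' -> derives E b b' ->
      derives E (Add a b) (Add a' b')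
  | d_mul : forall a a' b b', derives E a a' -> derives E b b' ->
      derives E (Mul a b) (Mul a' b')
  | d_opp : forall a a', derives E a a' -> derives E (Opp a) (Opp a')
  | d_inv : forall a a', derives E a a' -> derives E (Inv a) (Inv a').

Inductive context : Type :=
  | Hole : context
  | CAddL : context -> term -> context
  | CAddR : term -> context -> context
  | CMulL : context -> term -> context
  | CMulR : term -> context -> context
  | COpp : context -> context
  | CInv : context -> context.

Fixpoint plug (C : context) (r : term) : term :=
  match C with
  | Hole => r
  | CAddL c u => Add (plug c r) u
  | CAddR u c => Add u (plug c r)
  | CMulL c u => Mul (plug c r) u
  | CMulR u c => Mul u (plug c r)
  | COpp c => Opp (plug c r)
  | CInv c => Inv (plug c r)
  end.

Definition one_t (t : term) : term := Mul t (Inv t).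
Definition zero_t (t : term) : term := Add One (Opp (one_t t)).

(* Main.v *)
Require Import Defs.
From Stdlib Require Import Setoid Morphisms Ring Ring_theory.

Infix "=~" := (derives Md) (at level 70).

Definition sb (a b c : term) : nat -> term :=
  fun n => match n with 0 => a | 1 => b | _ => c end.

Ltac ax H a b c := exact (d_ax Md _ _ (sb a b c) H).

Lemma addA a b c : Add (Add a b) c =~ Add a (Add b c). Proof. ax Md_addA a b c. Qed.
Lemma addC a b : Add a b =~ Add b a. Proof. ax Md_addC a b Zero. Qed.
Lemma add0 a : Add a Zero =~ a. Proof. ax Md_add0 a Zero Zero. Qed.
Lemma addN a : Add a (Opp a) =~ Zero. Proof. ax Md_addN a Zero Zero. Qed.
Lemma mulA a b c : Mul (Mul a b) c =~ Mul a (Mul b c). Proof. ax Md_mulA a b c. Qed.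
Lemma mulC a b : Mul a b =~ Mul b a. Proof. ax Md_mulC a b Zero. Qed.
Lemma mul1 a : Mul One a =~ a. Proof. ax Md_mul1 a Zero Zero. Qed.
Lemma mulD a b c : Mul a (Add b c) =~ Add (Mul a b) (Mul a c). Proof. ax Md_mulD a b c. Qed.
Lemma invK a : Inv (Inv a) =~ a. Proof. ax Md_invK a Zero Zero. Qed.
Lemma pinv a : Mul a (Mul a (Inv a)) =~ a. Proof. ax Md_pinv a Zero Zero. Qed.

Add Parametric Relation : term (derives Md)
  reflexivity proved by (d_refl Md)
  symmetry proved by (d_sym Md)
  transitivity proved by (d_trans Md) as der_rel.

Add Parametric Morphism : Add with signature derives Md ==> derives Md ==> derives Md as add_mor.
Proof. intros; apply d_add; auto. Qed.
Add Parametric Morphism : Mul with signature derives Md ==> derives Md ==> derives Md as mul_mor.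
Proof. intros; apply d_mul; auto. Qed.
Add Parametric Morphism : Opp with signature derives Md ==> derives Md as opp_mor.
Proof. intros; apply d_opp; auto. Qed.
Add Parametric Morphism : Inv with signature derives Md ==> derives Md as inv_mor.
Proof. intros; apply d_inv; auto. Qed.

Definition tsub x y := Add x (Opp y).

Lemma tr_theory : ring_theory Zero One Add Mul tsub Opp (derives Md).
Proof.
  constructor.
  - intro x. rewrite addC. apply add0.
  - apply addC.
  - intros; symmetry; apply addA.
  - apply mul1.
  - apply mulC.
  - intros; symmetry; apply mulA.
  - intros x y z. rewrite mulC, mulD, (mulC z x), (mulC z y). reflexivity.
  - intros; reflexivity.
  - apply addN.
Qed.

Lemma tr_ext : ring_eq_ext Add Mul Opp (derives Md).
Proof. constructor; intros ? ? H; try intros ? ? H'; rewrite ?H, ?H'; reflexivity. Qed.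

Add Ring tr : tr_theory (setoid der_rel tr_ext).

Lemma pinv' a : Mul (Inv a) (Mul (Inv a) a) =~ Inv a.
Proof. rewrite <- (invK a) at 3. apply pinv. Qed.

Lemma uniq x y z :
  Mul (Mul x x) y =~ x -> Mul (Mul y y) x =~ y ->
  Mul (Mul x x) z =~ x -> Mul (Mul z z) x =~ z -> y =~ z.
Proof.
  intros H1 H2 H3 H4.
  transitivity (Mul y (Mul x z)).
  - transitivity (Mul (Mul y y) x). symmetry; exact H2.
    transitivity (Mul (Mul y y) (Mul (Mul x x) z)). rewrite H3; reflexivity.
    transitivity (Mul (Mul (Mul y y) x) (Mul x z)). ring. rewrite H2. reflexivity.
  - symmetry.
    transitivity (Mul (Mul z z) x). symmetry; exact H4.
    transitivity (Mul (Mul z z) (Mul (Mul x x) y)). rewrite H1; reflexivity.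
    transitivity (Mul (Mul (Mul z z) x) (Mul x y)). ring. rewrite H4. ring.
Qed.

Lemma inv_e e x : Mul e e =~ e -> Inv (Mul e x) =~ Mul e (Inv x).
Proof.
  intro He. apply (uniq (Mul e x)).
  - transitivity (Mul (Mul e x) (Mul (Mul e x) (Inv (Mul e x)))). ring. apply pinv.
  - transitivity (Mul (Inv (Mul e x)) (Mul (Inv (Mul e x)) (Mul e x))). ring. apply pinv'.
  - transitivity (Mul (Mul e (Mul e e)) (Mul x (Mul x (Inv x)))). ring.
    rewrite pinv, !He. reflexivity.
  - transitivity (Mul (Mul e (Mul e e)) (Mul (Inv x) (Mul (Inv x) x))). ring.
    rewrite pinv', !He. reflexivity.
Qed.

Lemma prop_e e : Mul e e =~ e -> forall C r, Mul e (plug C r) =~ Mul e (plug C (Mul e r)).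
Proof.
  intros He C r. induction C as [|c IH u|u c IH|c IH u|u c IH|c IH|c IH]; simpl.
  - transitivity (Mul (Mul e e) r). rewrite He; reflexivity. ring.
  - transitivity (Add (Mul e (plug c r)) (Mul e u)). ring.
    rewrite IH. ring.
  - transitivity (Add (Mul e (plug c r)) (Mul e u)). ring.
    rewrite IH. ring.
  - transitivity (Mul (Mul e (plug c r)) u). ring.
    rewrite IH. ring.
  - transitivity (Mul (Mul e (plug c r)) u). ring.
    rewrite IH. ring.
  - transitivity (Opp (Mul e (plug c r))). ring.
    rewrite IH. ring.
  - rewrite <- !(inv_e e) by exact He. rewrite IH. reflexivity.
Qed.

Theorem mainTheorem7 :
  forall (t r : term) (C : context),
    derives Md (Mul (one_t t) (plug C r)) (Mul (one_t t) (plug C (Mul (one_t t) r))) /\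
    derives Md (Mul (zero_t t) (plug C r)) (Mul (zero_t t) (plug C (Mul (zero_t t) r))).
Proof.
  intros t r C.
  assert (He : Mul (one_t t) (one_t t) =~ one_t t).
  { unfold one_t. transitivity (Mul (Mul t (Mul t (Inv t))) (Inv t)). ring.
    rewrite pinv. reflexivity. }
  split; apply prop_e; auto.
  unfold zero_t. transitivity (Add One (Add (Opp (Add (one_t t) (one_t t))) (Mul (one_t t) (one_t t)))). ring.
  rewrite He. ring.
Qed.
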